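(* Let $n\in\mathbb{N}$, $h_0>0$, $h_1,\ldots,h_n\in\mathbb{C}$, and $H(z)\coloneq h_0+2\sum_{k=1}^nh_kz^k$. There is exactly one such polynomial $H$ (for given $h_0$) satisfying all of: $\operatorname{Re}H(z)>0$ for all $z\in\Delta$; $h_n>0$; all $n$ roots of $H$ lie on the unit circle $\{|z|=1\}$. Namely, $H(z)=h_0(1+z^n)$.
   Context: $\Delta=\{z\in\mathbb{C}:|z|<1\}$ is the open unit disk. *)

(* Defs.v *)
From HB Require Import structures.
From mathcomp Require Import all_boot all_order all_algebra.
From mathcomp Require Import reals.
From mathcomp Require Export complex.
Set Implicit Arguments. Unset Strict Implicit. Unset Printing Implicit Defensive.
Import Order.TTheory GRing.Theory Num.Theory.
Local Open Scope ring_scope.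

Definition Hfun (R : realType) (n : nat) (h0 : R[i]) (h : nat -> R[i]) (z : R[i]) : R[i] :=
  h0 + 2%:R * \sum_(1 <= k < n.+1) h k * z ^+ k.

Definition in_disk (R : realType) (z : R[i]) : Prop := `|z| < 1.

(* Main.v *)
Require Import Defs.
From HB Require Import structures.
From mathcomp Require Import all_boot all_order all_algebra.
From mathcomp Require Import reals complex.
From mathcomp Require Import cyclic separable cyclotomic.
From mathcomp Require Import ring lra.
Import Order.TTheory GRing.Theory Num.Theory.
Local Open Scope ring_scope.
Local Open Scope complex_scope.
Local Open Scope ring_scope.
Section Aux.
Variable R : realType.
Local Set Implicit Arguments.
Local Notation C := R[i].

Lemma prim_exists n : (n > 0)%N -> {z : C | n.-primitive_root z}.
Proof.
pose p : {poly C} := 'X^n - 1; have [r Dp] := closed_field_poly_normal p.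
move=> n_gt0; apply/sigW; rewrite (monicP _) ?monicXnsubC // scale1r in Dp.
have rn1: all n.-unity_root r by apply/allP=> z; rewrite -root_prod_XsubC -Dp.
have sz_r: (n < (size r).+1)%N.
  by rewrite -(size_prod_XsubC r id) -Dp size_XnsubC.
have [|z] := hasP (has_prim_root n_gt0 rn1 _ sz_r); last by exists z.
by rewrite -separable_prod_XsubC -Dp separable_Xn_sub_1 // pnatr_eq0 -lt0n.
Qed.

Lemma geo_sum n (z : C) e : n.-primitive_root z ->
  \sum_(j < n) (z ^+ e) ^+ j = if (n %| e)%N then n%:R else 0.
Proof.
move=> pz; case: ifP => hd.
  have : z ^+ e = 1 by apply/eqP; rewrite -(prim_order_dvd pz).
  move=> ->; under eq_bigr do rewrite expr1n.
  by rewrite sumr_const card_ord.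
have h1 : z ^+ e != 1 by rewrite -(prim_order_dvd pz) hd.
have : (z ^+ e) ^+ n - 1 = 0 by rewrite exprAC (prim_expr_order pz) expr1n subrr.
rewrite subrX1 => /eqP; rewrite mulf_eq0 subr_eq0 (negPf h1) /=.
by move/eqP.
Qed.

Lemma lim0 (c K : R) :
  (forall t : R, 0 < t -> t < 1 -> exists e, `|e| <= K /\ 0 < c + t * e) ->
  0 <= c.
Proof.
move=> H; rewrite leNgt; apply/negP => c0.
have K0 : 0 <= K.
  have [e [he _]] := H (1/2) ltac:(lra) ltac:(lra).
  exact: le_trans (normr_ge0 _) he.
pose t := (- c) / (- c + K + 1).
have d0 : 0 < - c + K + 1 by rewrite -addrA ltr_wpDr // ?oppr_gt0 // ?ltr_wpDl //; lra.
have t0 : 0 < t by rewrite divr_gt0 // oppr_gt0.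
have t1 : t < 1 by rewrite ltr_pdivrMr // mul1r; lra.
have [e [he hpos]] := H t t0 t1.
have : t * e <= t * K.
  by rewrite ler_pM2l //; exact: le_trans (ler_norm _) he.
have : c + t * K < 0.
  have hh : (c + t * K) * (- c + K + 1) < 0.
    rewrite mulrDl /t mulrAC divfK ?lt0r_neq0 //; nra.
  by move: hh; rewrite pmulr_llt0.
lra.
Qed.

Lemma d0 (c K : R) :
  (forall t : R, 0 < `|t| -> `|t| < 1 -> exists e, `|e| <= K /\ 0 < c * t + t ^+ 2 * e) ->
  c = 0.
Proof.
move=> H; apply/eqP; rewrite eq_le; apply/andP; split.
- rewrite -oppr_ge0; apply: (@lim0 _ K) => t t0 t1.
  have [e [he hp]] := H (- t) ltac:(by rewrite normrN gtr0_norm) ltac:(by rewrite normrN gtr0_norm).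
  exists e; split => //.
  have : 0 < t * (- c + t * e) by rewrite sqrrN expr2 in hp; nra.
  by rewrite pmulr_rgt0.
- apply: (@lim0 _ K) => t t0 t1.
  have [e [he hp]] := H t ltac:(by rewrite gtr0_norm) ltac:(by rewrite gtr0_norm).
  exists e; split => //.
  have : 0 < t * (c + t * e) by rewrite expr2 in hp; nra.
  by rewrite pmulr_rgt0.
Qed.

End Aux.
Section Aux2.
Variable R : realType.
Local Set Implicit Arguments.
Local Notation C := R[i].

Lemma ReD (x y : C) : complex.Re (x + y) = complex.Re x + complex.Re y.
Proof. by case: x; case: y. Qed.

Lemma ReN (x : C) : complex.Re (- x) = - complex.Re x.
Proof. by case: x. Qed.

Lemma ReMr (r : R) (z : C) : complex.Re (r%:C * z) = r * complex.Re z.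
Proof. case: z => a b /=; by rewrite mul0r subr0. Qed.

Lemma Re_sum I (s : seq I) (P : pred I) (F : I -> C) :
  complex.Re (\sum_(i <- s | P i) F i) = \sum_(i <- s | P i) complex.Re (F i).
Proof. by apply: (big_morph _ ReD). Qed.

Lemma le_Re (x : R) (K : C) : x%:C <= K -> x <= complex.Re K.
Proof. by rewrite lecE => /andP[]. Qed.

Lemma normRe (z : C) : `|complex.Re z|%:C <= `|z|.
Proof. exact: normc_ge_Re. Qed.

Lemma poly_bound (p : {poly C}) : exists M : C,
  forall x, `|x| <= 1 -> `|p.[x]| <= M.
Proof.
exists (\sum_(i < size p) `|p`_i|) => x hx.
rewrite horner_coef; apply: le_trans (ler_norm_sum _ _ _) _.
apply: ler_sum => i _; rewrite normrM normrX.
apply: ler_piMr => //; exact: exprn_ile1.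
Qed.

Lemma taylor (p : {poly C}) (w : C) : exists T : {poly C},
  forall x, p.[x] = p.[w] + (x - w) * p^`().[w] + (x - w) ^+ 2 * T.[x].
Proof.
have r1 : root (p - p.[w]%:P) w by rewrite /root !hornerE subrr.
have [q hq] := factor_theorem _ _ r1.
have r2 : root (q - q.[w]%:P) w by rewrite /root !hornerE subrr.
have [T hT] := factor_theorem _ _ r2.
have hd : p^`().[w] = q.[w].
  have -> : p = q * ('X - w%:P) + p.[w]%:P by rewrite -hq subrK.
  by rewrite derivD derivC addr0 derivM derivXsubC mulr1 !hornerE subrr mulr0 add0r.
exists T => x; rewrite hd.
have -> : p = (T * ('X - w%:P) + q.[w]%:P) * ('X - w%:P) + p.[w]%:P.
  by rewrite -hT subrK -hq subrK.
rewrite !hornerE; ring.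
Qed.

End Aux2.
Section Aux3.
Variable R : realType.
Local Set Implicit Arguments.
Local Notation C := R[i].

Lemma normC2 (a b : R) :
  `|a%:C + 'i%C * b%:C| = (Num.sqrt (a ^+ 2 + b ^+ 2))%:C.
Proof. rewrite normc_def /=; congr (_ %:C); congr (Num.sqrt _); ring. Qed.

Lemma normCR (t : R) : `|t%:C| = `|t|%:C.
Proof.
have -> : t%:C = t%:C + 'i%C * 0%:C by rewrite mulr0 addr0.
by rewrite normC2 expr0n /= addr0 sqrtr_sqr.
Qed.

Lemma one_C : (1 : C) = 1%:C. Proof. by []. Qed.

Lemma bdry_ge0 (P : {poly C}) (w : C) : `|w| = 1 ->
  (forall z, `|z| < 1 -> 0 < complex.Re P.[z]) -> 0 <= complex.Re P.[w].
Proof.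
move=> w1 HP; have [T HT] := taylor P w; have [M HM] := poly_bound T.
apply: (@lim0 _ _ (complex.Re (`|w * P^`().[w]| + M))) => t t0 t1.
pose x := w - t%:C * w.
have xn : `|x| < 1.
  have -> : x = w * (1 - t)%:C by rewrite /x rmorphB /= -one_C; ring.
  by rewrite normrM w1 mul1r normCR one_C ltcR gtr0_norm; lra.
pose e := complex.Re (- (w * P^`().[w]) + t%:C * (w ^+ 2 * T.[x])).
exists e; split.
  apply: le_Re; rewrite /e; apply: le_trans; first exact: normRe.
  apply: le_trans; first exact: ler_normD.
  rewrite normrN lerD2l normrM normrM normrX w1 expr1n mul1r normCR.
  apply: le_trans (HM _ (ltW xn)); apply: ler_piMl => //.

  by rewrite one_C lecR ger0_norm; lra.
have := HP x xn; rewrite HT.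
have -> : P.[w] + (x - w) * P^`().[w] + (x - w) ^+ 2 * T.[x] =
   P.[w] + t%:C * (- (w * P^`().[w]) + t%:C * (w ^+ 2 * T.[x])) by rewrite /x; ring.
by rewrite ReD ReMr.
Qed.

Lemma bdry_deriv (P : {poly C}) (w : C) : `|w| = 1 ->
  (forall z, `|z| < 1 -> 0 < complex.Re P.[z]) -> complex.Re P.[w] = 0 ->
  complex.Im (w * P^`().[w]) = 0.
Proof.
move=> w1 HP Hw; have [T HT] := taylor P w; have [M HM] := poly_bound T.
apply/eqP; rewrite -oppr_eq0 -ReiNIm; apply/eqP.
apply: (@d0 _ _ (complex.Re (`|w * P^`().[w]| + 2%:R * M))) => t t0 t1.
pose x := w * ((1 - t ^+ 2)%:C + 'i%C * t%:C).
have xn : `|x| < 1.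
  rewrite /x normrM w1 mul1r normC2 one_C ltcR.
  apply: (@lt_le_trans _ _ (Num.sqrt 1)); last by rewrite sqrtr1.
  rewrite ltr_sqrt; last by lra.
  have h1 : t ^+ 2 < 1 by rewrite -real_normK ?num_real // expr_lt1 //; lra.
  have h2 : 0 < t ^+ 2 by rewrite -real_normK ?num_real // exprn_gt0.
  nra.
pose e := complex.Re (- (w * P^`().[w]) + (w * ('i%C - t%:C)) ^+ 2 * T.[x]).
exists e; split.
  apply: le_Re; rewrite /e; apply: le_trans; first exact: normRe.
  apply: le_trans; first exact: ler_normD.
  rewrite normrN lerD2l normrM normrX normrM w1 mul1r.
  have -> : 'i%C - t%:C = (- t)%:C + 'i%C * 1%:C by rewrite -one_C mulr1 rmorphN /= addrC.
  rewrite normC2 -rmorphXn /= sqr_sqrtr; last by rewrite addr_ge0 // sqr_ge0.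
  have hT := HM _ (ltW xn).
  have two : (2 : C) = (2 : R)%:C by rewrite rmorph_nat.
  apply: ler_pM => //; first by rewrite ler0c addr_ge0 // sqr_ge0.
  rewrite two lecR sqrrN expr1n.
  have : `|t| ^+ 2 < 1 by rewrite expr_lt1 //; lra.
  rewrite real_normK ?num_real //; lra.
have := HP x xn; rewrite HT.
have -> : P.[w] + (x - w) * P^`().[w] + (x - w) ^+ 2 * T.[x] =
   P.[w] + t%:C * (w * P^`().[w] * 'i%C) + t%:C ^+ 2 * (- (w * P^`().[w]) + (w * ('i%C - t%:C)) ^+ 2 * T.[x]).
  rewrite /x rmorphB /= rmorphXn /= -one_C; ring.
rewrite !ReD ReMr -rmorphXn /= ReMr Hw add0r mulrC.
done.
Qed.

End Aux3.
Section Main.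
Variable R : realType.
Local Notation C := R[i].
Variables (n : nat) (h0 : C) (h : nat -> C).

Definition acoef (i : nat) : C := if i == 0%N then h0 else 2%:R * h i.
Definition Pn : {poly C} := \poly_(i < n.+1) acoef i.

Lemma sum_shift (F : nat -> C) : \sum_(1 <= k < n.+1) F k = \sum_(i < n) F i.+1.
Proof. by rewrite big_add1 /= big_mkord. Qed.

Lemma PnE z : Pn.[z] = Hfun n h0 h z.
Proof.
rewrite /Pn horner_poly big_ord_recl /= /Hfun sum_shift mulr_sumr expr0 mulr1.
by congr (_ + _); apply: eq_bigr => i _; rewrite /acoef /= mulrA.
Qed.

Lemma Pn_deriv w : w * Pn^`().[w] = \sum_(i < n.+1) (i%:R * acoef i) * w ^+ i.
Proof.
have -> : Pn^`() = \poly_(i < n) (acoef i.+1 *+ i.+1).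
  apply/polyP => i; rewrite coef_deriv !coef_poly.
  by rewrite ltnS; case: ltnP => hi; rewrite ?mul0rn.
rewrite horner_poly big_ord_recl /= mul0r mul0r add0r mulr_sumr.
apply: eq_bigr => i _; rewrite /bump /= exprS; rewrite -mulr_natl; ring.
Qed.

Lemma sum_delta (F : nat -> C) a b m : (a <= m)%N -> (m < b)%N ->
  \sum_(a <= k < b) (if k == m then F k else 0) = F m.
Proof.
move=> am mb.
rewrite (big_cat_nat am (ltnW mb)) /=  (@big_cat_nat _ _ _ m.+1 m b _ _ (leqnSn m) mb) /=.
rewrite big_nat1 eqxx big1_seq ?add0r; last first.
  by move=> k; rewrite mem_index_iota => /andP[_ /andP[_ km]]; rewrite ltn_eqF.
rewrite big1_seq ?addr0 // => k; rewrite mem_index_iota => /andP[_ /andP[mk _]].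
by rewrite gtn_eqF.
Qed.

End Main.
Section Dft.
Variable R : realType.
Local Notation C := R[i].
Variables (n : nat) (z : C).
Hypothesis pz : n.-primitive_root z.
Hypothesis hn : (0 < n)%N.

Lemma dvd_shift m k : (0 < m)%N -> (m < n)%N -> (0 < k)%N -> (k < n)%N ->
  (n %| n - m + k)%N = (k == m).
Proof.
move=> m0 mn k0 kn; case: (ltngtP k m) => km.
- rewrite gtnNdvd //; first by rewrite addn_gt0 subn_gt0 mn.
  have : (n - m + k < n - m + m)%N by rewrite ltn_add2l.
  by rewrite subnK // ltnW.
- have -> : (n - m + k = n + (k - m))%N.
    by rewrite addnBAC ?(ltnW mn) // -addnBA ?(ltnW km).
  rewrite dvdn_addr // gtnNdvd ?subn_gt0 //.
  exact: leq_ltn_trans (leq_subr m k) kn.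
- by rewrite km subnK ?(ltnW mn) // dvdnn.
Qed.

Lemma dft (c : nat -> C) m : (0 < m)%N -> (m < n)%N ->
  \sum_(j < n) (z ^+ j) ^+ (n - m) * \sum_(1 <= k < n) c k * (z ^+ j) ^+ k = n%:R * c m.
Proof.
move=> m0 mn.
under eq_bigr do rewrite mulr_sumr.
rewrite exchange_big /=.
rewrite -(@sum_delta R (fun k => n%:R * c k) 1 n m) //.
apply: eq_big_nat => k /andP[k0 kn].
have -> : \sum_(j < n) (z ^+ j) ^+ (n - m) * (c k * (z ^+ j) ^+ k) =
          c k * \sum_(j < n) (z ^+ (n - m + k)) ^+ j.
  rewrite mulr_sumr; apply: eq_bigr => j _.
  by rewrite mulrCA -exprD -!exprM mulnC mulnDl.
rewrite geo_sum // dvd_shift //.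
by case: eqP => _; rewrite ?mulr0 // mulrC.
Qed.

Lemma conj_unit (u : C) (k : nat) : `|u| = 1 -> u ^+ n = 1 -> (k <= n)%N ->
  (u ^+ k)^*%C = u ^+ (n - k).
Proof.
move=> u1 un kn.
have u0 : u ^+ k != 0 by rewrite expf_neq0 // -normr_eq0 u1 oner_neq0.
apply: (mulIf u0).
rewrite -exprD subnK // un mulrC -sqr_normc normrX u1 !expr1n //.
Qed.

Lemma z_norm : `|z| = 1.
Proof.
apply/eqP; rewrite -(pexpr_eq1 hn) // -normrX (prim_expr_order pz) normr1 //.
Qed.

Lemma dftc (c : nat -> C) m : (0 < m)%N -> (m < n)%N ->
  \sum_(j < n) (z ^+ j) ^+ (n - m) * (\sum_(1 <= k < n) c k * (z ^+ j) ^+ k)^*%C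
   = n%:R * (c (n - m)%N)^*%C.
Proof.
move=> m0 mn.
rewrite -(dft (fun k => (c (n - k)%N)^*%C)) //.
apply: eq_bigr => j _; congr (_ * _).
rewrite rmorph_sum /= big_nat_rev /=.
apply: eq_big_nat => k /andP[k0 kn].
rewrite add1n subSS rmorphM /= conj_unit; last first.
- by rewrite leq_subr.
- by rewrite exprAC (prim_expr_order pz) expr1n.
- by rewrite normrX z_norm expr1n.
by rewrite subKn // ltnW.
Qed.

End Dft.
Theorem mainTheorem5 (R : realType) (n : nat) (hn1 : (1 <= n)%N)
    (h0 : R[i]) (h : nat -> R[i]) (h0pos : 0 < h0) :
  ((forall z : R[i], in_disk z -> 0 < complex.Re (Hfun n h0 h z))
   /\ 0 < h n
   /\ (forall z : R[i], Hfun n h0 h z = 0 -> `|z| = 1))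
  <-> (forall z : R[i], Hfun n h0 h z = h0 * (1 + z ^+ n)).
Proof.
have n0 : (n == 0)%N = false by case: n hn1.
have nC0 : (n%:R : R[i]) != 0 by rewrite pnatr_eq0 n0.
have twoC0 : (2%:R : R[i]) != 0 by rewrite pnatr_eq0.
split.
- move=> [HRe [Hhn Hroot]].
  set P := Pn R n h0 h.
  have HP : forall z, `|z| < 1 -> 0 < complex.Re P.[z].
    by move=> z hz; rewrite /P PnE; exact: HRe.
  have hn0 : h n != 0 by rewrite lt0r_neq0.
  have lc : lead_coef P = 2%:R * h n.
    by rewrite lead_coef_poly //= /acoef n0 // mulf_neq0.
  have [r Dp] := closed_field_poly_normal P.
  have hr : forall x, x \in r -> `|x| = 1.
    move=> x xr; apply: Hroot; rewrite -PnE; apply/eqP.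
    have : root P x by rewrite Dp rootZ ?root_prod_XsubC // lc mulf_neq0.
    by [].
  have e0 : P.[0] = h0 by rewrite horner_coef0 coef_poly /=.
  have : `|h0| = `|2%:R * h n|.
    rewrite -e0 -lc {1}Dp hornerZ horner_prod normrM normr_prod big_seq big1 ?mulr1 //.
    by move=> x xr; rewrite hornerXsubC sub0r normrN hr.
  rewrite gtr0_norm // gtr0_norm; last by rewrite mulr_gt0 // ltr0n.
  move=> h0e.
  have [ze pz] := prim_exists R n hn1.
  pose w := n.-root (-1 : R[i]).
  have wn : w ^+ n = -1 by rewrite rootCK.
  have w1 : `|w| = 1.
    by apply/eqP; rewrite -(pexpr_eq1 hn1) // -normrX wn normrN normr1.
  pose wj (j : nat) := w * ze ^+ j.
  have wj1 : forall j, `|wj j| = 1.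
    by move=> j; rewrite normrM normrX w1 (z_norm _ _ _ pz hn1) expr1n mulr1.
  have wjn : forall j, wj j ^+ n = -1.
    by move=> j; rewrite exprMn wn exprAC (prim_expr_order pz) expr1n mulr1.
  pose b k := 2%:R * h k * w ^+ k.
  have XE : forall j, P.[wj j] = \sum_(1 <= k < n) b k * (ze ^+ j) ^+ k.
    move=> j; rewrite PnE /Hfun big_nat_recr //= wjn mulrDr h0e mulr_sumr.
    rewrite mulrN1 mulrN addrCA subrr addr0.
    by apply: eq_bigr => k _; rewrite /wj /b exprMn exprAC; ring.
  have YE : forall j, wj j * P^`().[wj j] =
      - (n%:R * h0) + \sum_(1 <= k < n) (k%:R * b k) * (ze ^+ j) ^+ k.
    move=> j; rewrite Pn_deriv big_ord_recl mul0r mul0r add0r.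
    rewrite -(sum_shift R n (fun k => (k%:R * acoef R h0 h k) * wj j ^+ k)).
    rewrite big_nat_recr //= wjn /acoef n0 -h0e addrC.
    congr (_ + _); first by rewrite mulrN1.
    apply: eq_big_nat => k /andP[k0 kn].
    have -> : (k == 0)%N = false by case: k k0 {kn}.
    by rewrite /wj /b exprMn exprAC; ring.
  have Xsum : \sum_(j < n) P.[wj j] = 0.
    under eq_bigr do rewrite XE.
    rewrite exchange_big /=; apply: big1_seq => k.
    rewrite mem_index_iota => /andP[_ /andP[k0 kn]].
    rewrite -mulr_sumr.
    under eq_bigr do rewrite exprAC.
    by rewrite geo_sum // gtnNdvd // mulr0.
  have ReX : forall j : 'I_n, complex.Re P.[wj j] = 0.
    have hs : \sum_(j < n) complex.Re P.[wj j] = 0.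
      by rewrite -Re_sum Xsum.
    move=> j; apply: (psumr_eq0P _ hs) => // i _.
    exact: bdry_ge0.
  have ImY : forall j : 'I_n, complex.Im (wj j * P^`().[wj j]) = 0.
    by move=> j; apply: bdry_deriv.
  have h0c : h0^*%C = h0.
    move: h0pos; case: (h0) => a b0; rewrite ltcE /= => /andP[/eqP b00 _].
    by rewrite b00 /= oppr0.
  have bz : forall m, (0 < m)%N -> (m < n)%N -> b m = 0.
    move=> m m0 mn.
    pose Xs j := \sum_(1 <= k < n) b k * (ze ^+ j) ^+ k.
    pose Zs j := \sum_(1 <= k < n) (k%:R * b k) * (ze ^+ j) ^+ k.
    have e1 : \sum_(j < n) (ze ^+ j) ^+ (n - m) * (Xs j + (Xs j)^*%C) = 0.
      apply: big1 => j _; rewrite /Xs -XE addcJ ReX.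
      by rewrite (_ : (0 : R)%:C = 0) // !mulr0.
    have e2 : \sum_(j < n) (ze ^+ j) ^+ (n - m) * (Zs j - (Zs j)^*%C) = 0.
      apply: big1 => j _.
      have -> : Zs j = wj j * P^`().[wj j] + n%:R * h0 by rewrite YE /Zs; ring.
      have cK : (n%:R * h0)^*%C = n%:R * h0.
        by rewrite rmorphM /= conjc_nat h0c.
      have -> : forall y : R[i], y + n%:R * h0 - (y + n%:R * h0)^*%C = y - y^*%C.
        by move=> y; rewrite rmorphD /= cK; ring.
      by rewrite subcJ ImY (_ : (0 : R)%:C = 0) // !mulr0 mul0r mulr0.
    have e1' : n%:R * b m + n%:R * (b (n - m)%N)^*%C = 0.
      rewrite -e1 -(dft _ _ _ pz b m m0 mn) -(dftc _ _ _ pz hn1 b m m0 mn) -big_split /=.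
      by apply: eq_bigr => j _; rewrite mulrDr.
    have e2' : n%:R * (m%:R * b m) - n%:R * ((n - m)%:R * b (n - m)%N)^*%C = 0.
      rewrite -e2 -(dft _ _ _ pz (fun k => k%:R * b k) m m0 mn).
      rewrite -(dftc _ _ _ pz hn1 (fun k => k%:R * b k) m m0 mn) -sumrB.
      by apply: eq_bigr => j _; rewrite mulrBr.
    rewrite rmorphM /= conjc_nat natrB ?(ltnW mn) // in e2'.
    move: e1' e2'; set u := b m; set v := (b (n - m)%N)^*%C => e1' e2'.
    have : n%:R * n%:R * u = 0.
      have -> : n%:R * n%:R * u = (n%:R * (m%:R * u) - n%:R * ((n%:R - m%:R) * v))
          + (n%:R - m%:R) * (n%:R * u + n%:R * v) by ring.
      by rewrite e1' e2' mulr0 addr0.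
    by move/eqP; rewrite mulf_eq0 mulf_eq0 (negPf nC0) /= => /eqP.
  have w0 : w != 0 by rewrite -normr_eq0 w1 oner_neq0.
  move=> z; rewrite /Hfun big_nat_recr //= big1_seq ?add0r; last first.
    move=> k; rewrite mem_index_iota => /andP[_ /andP[k0 kn]].
    have := bz k k0 kn; rewrite /b => /eqP.
    rewrite !mulf_eq0 (negPf twoC0) (negPf (expf_neq0 k w0)) orbF /= => /eqP ->.
    by rewrite mul0r.
  by rewrite h0e; ring.
- move=> E.
  have h0R : h0 = (complex.Re h0)%:C.
    by move: h0pos; case: (h0) => a b0; rewrite ltcE /= => /andP[/eqP -> _].
  have h0Re : 0 < complex.Re h0 by move: h0pos; rewrite ltcE => /andP[_].
  split; [|split].
  + move=> z hz; rewrite E h0R ReMr; apply: mulr_gt0 => //.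
    rewrite ReD.
    have hzn : `|z ^+ n| < 1 by rewrite normrX expr_lt1.
    have : `|complex.Re (z ^+ n)|%:C < 1 by apply: le_lt_trans hzn; exact: normRe.
    rewrite one_C ltcR ltr_norml => /andP[h1 _].
    by rewrite (_ : complex.Re 1 = 1) //; lra.
  + set D := Pn R n h0 h - (h0%:P + h0 *: 'X^n).
    have Dz : forall x, D.[x] = 0.
      by move=> x; rewrite /D !hornerE PnE E; ring.
    have D0 : D = 0.
      apply/eqP; apply/negPn/negP => nz.
      pose rs : seq R[i] := [seq i%:R | i <- iota 0 (size D)].
      have hr : all (root D) rs by apply/allP => x _; rewrite /root Dz.
      have hu : uniq rs.
        rewrite map_inj_uniq ?iota_uniq // => a c /eqP.
        by rewrite eqr_nat => /eqP.
      have := max_poly_roots nz hr hu.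
      by rewrite size_map size_iota ltnn.
    have := congr1 (fun p : {poly R[i]} => p`_n) D0.
    rewrite /D coefB coef_poly ltnSn /acoef n0 coefD coefC n0 coefZ coefXn eqxx.
    rewrite mulr1 add0r coef0 => /eqP; rewrite subr_eq0 => /eqP e.
    by move: h0pos; rewrite -e pmulr_rgt0 // ltr0n.
  + move=> z; rewrite E => /eqP; rewrite mulf_eq0 (negPf (lt0r_neq0 h0pos)) /=.
    rewrite addr_eq0 => /eqP e.
    apply/eqP; rewrite -(pexpr_eq1 hn1) // -normrX -(normrN (z ^+ n)) -e normr1 //.
Qed.
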